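(* Let $g$ be a real binary form of degree $m$, let $q$ be a sum of squares real binary form of degree $2d-2m$, and let $p$ be a sum of squares real binary form of degree $2d$. If $g$ and $q$ are coprime, then there exists a sum of squares real binary form $s$ of degree $2m$ such that $p\equiv sq \pmod g$, i.e. $p-sq=tg$ for some real binary form $t$.
   Context: A real binary form of degree $n$ is a homogeneous polynomial of degree $n$ in two variables $x_1,x_2$ with real coefficients. A sum of squares binary form of degree $2n$ is one of the form $\sum_i w_i^2$ with $w_i$ real binary forms of degree $n$. Two binary forms are coprime if their greatest common divisor is a constant. *)

(* Defs.v *)
From HB Require Import structures.
From mathcomp Require Import all_boot all_order all_algebra.
From mathcomp Require Import reals.
From mathcomp Require Import mpoly.
Set Implicit Arguments. Unset Strict Implicit. Unset Printing Implicit Defensive.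
Import Order.TTheory GRing.Theory Num.Theory.
Local Open Scope ring_scope.

(* A real binary form of degree n : a homogeneous polynomial of degree n in
   two variables x_1, x_2 (the zero polynomial is homogeneous of every degree). *)
Definition binary_form (R : realType) (n : nat) (p : {mpoly R[2]}) : Prop :=
  p \is n.-homog.

Definition sos_form (R : realType) (n : nat) (p : {mpoly R[2]}) : Prop :=
  exists ws : seq {mpoly R[2]},
    (forall w, w \in ws -> binary_form n w) /\ p = \sum_(w <- ws) w ^+ 2.

Definition mdivides (R : realType) (h p : {mpoly R[2]}) : Prop :=
  exists k : {mpoly R[2]}, p = h * k.

Definition coprime_forms (R : realType) (g q : {mpoly R[2]}) : Prop :=
  forall h : {mpoly R[2]}, mdivides h g -> mdivides h q ->
    exists c : R, h = c%:MP.

(* Main.v *)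
Require Import Defs.
From HB Require Import structures.
From mathcomp Require Import all_boot all_order all_algebra.
From mathcomp Require Import reals.
From mathcomp Require Import mpoly.
From mathcomp Require Import zify ring.
From Stdlib Require Import Classical.
Set Warnings "-notation-overridden,-ambiguous-paths,-notation-incompatible-prefix,-notation-incompatible-format".
Import Order.TTheory GRing.Theory Num.Theory.
Local Open Scope ring_scope.
Section S.
Variable R : realType.
Implicit Types (F G : {poly R}) (f g : {mpoly R[2]}).
Definition i1 : 'I_2 := @Ordinal 2 1 isT.
Definition Dm (c : R) (f : {mpoly R[2]}) : {poly R} :=
  mmap (@polyC R) (fun i : 'I_2 => if i == ord0 then 'X else 1 + c *: 'X) f.
Lemma DmM c f g : Dm c (f * g) = Dm c f * Dm c g.
Proof. by rewrite /Dm rmorphM. Qed.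
Lemma DmD c f g : Dm c (f + g) = Dm c f + Dm c g.
Proof. by rewrite /Dm rmorphD. Qed.
Lemma DmB c f g : Dm c (f - g) = Dm c f - Dm c g.
Proof. by rewrite /Dm rmorphB. Qed.
Lemma Dm0 c : Dm c 0 = 0.
Proof. by rewrite /Dm rmorph0. Qed.
Lemma DmN c f : Dm c (- f) = - Dm c f.
Proof. by rewrite /Dm rmorphN. Qed.
Lemma DmXn c f k : Dm c (f ^+ k) = Dm c f ^+ k.
Proof. by rewrite /Dm rmorphXn. Qed.
Lemma Dm_sum c (I : Type) (r : seq I) (F : I -> {mpoly R[2]}) :
  Dm c (\sum_(i <- r) F i) = \sum_(i <- r) Dm c (F i).
Proof. by rewrite /Dm rmorph_sum. Qed.
Lemma DmC c a : Dm c a%:MP = a%:P.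
Proof. by rewrite /Dm mmapC. Qed.
Lemma DmZ c a f : Dm c (a *: f) = a *: Dm c f.
Proof. by rewrite /Dm mmapZ mul_polyC. Qed.
Lemma DmX0 c : Dm c 'X_ord0 = 'X.
Proof. by rewrite /Dm mmapX mmap1U. Qed.
Lemma DmX1 c : Dm c 'X_i1 = 1 + c *: 'X.
Proof. by rewrite /Dm mmapX mmap1U. Qed.
Definition LL (c : R) : {mpoly R[2]} := 'X_i1 - c *: 'X_ord0.
Definition Hk (c : R) (k : nat) (F : {poly R}) : {mpoly R[2]} :=
  \sum_(i < k.+1) F`_i *: ('X_ord0 ^+ i * LL c ^+ (k - i)).

Lemma DmLL c : Dm c (LL c) = 1.
Proof. by rewrite /LL DmB DmZ DmX0 DmX1 addrK. Qed.

Lemma X0_homog : ('X_ord0 : {mpoly R[2]}) \is 1.-homog.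
Proof. by rewrite dhomogX /= mdeg1. Qed.
Lemma X1_homog : ('X_i1 : {mpoly R[2]}) \is 1.-homog.
Proof. by rewrite dhomogX /= mdeg1. Qed.
Lemma LL_homog c : LL c \is 1.-homog.
Proof. by rewrite /LL rpredB ?rpredZ ?X0_homog ?X1_homog. Qed.

Lemma Hk_homog c k F : Hk c k F \is k.-homog.
Proof.
rewrite /Hk; apply: rpred_sum => i _; apply: rpredZ.
have h := dhomogM (dhomogMn i X0_homog) (dhomogMn (k - i) (LL_homog c)).
by rewrite !mul1n subnKC in h; rewrite // -ltnS.
Qed.

Lemma DmH_gen c k F : Dm c (Hk c k F) = \poly_(i < k.+1) F`_i.
Proof.
rewrite /Hk Dm_sum poly_def; apply: eq_bigr => i _.
by rewrite DmZ DmM !DmXn DmX0 DmLL expr1n mulr1.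
Qed.

Lemma DmH c k F : (size F <= k.+1)%N -> Dm c (Hk c k F) = F.
Proof.
move=> hs; rewrite DmH_gen; apply/polyP => j; rewrite coef_poly.
case: ifP => // /negbT; rewrite -leqNgt => hj.
by rewrite nth_default // (leq_trans hs hj).
Qed.

Lemma Hk_lin c k a F G : Hk c k (a *: F + G) = a *: Hk c k F + Hk c k G.
Proof.
rewrite /Hk scaler_sumr -big_split; apply: eq_bigr => i _.
by rewrite coefD coefZ scalerDl scalerA.
Qed.
Lemma Hk0 c k : Hk c k 0 = 0.
Proof. by rewrite /Hk big1 // => i _; rewrite coef0 scale0r. Qed.
Lemma HkD c k F G : Hk c k (F + G) = Hk c k F + Hk c k G.
Proof. by have := Hk_lin c k 1 F G; rewrite !scale1r. Qed.
Lemma HkZ c k a F : Hk c k (a *: F) = a *: Hk c k F.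
Proof. by have := Hk_lin c k a F 0; rewrite !addr0 Hk0 addr0. Qed.
Lemma Hk_sum c k (I : Type) (r : seq I) (F : I -> {poly R}) :
  Hk c k (\sum_(i <- r) F i) = \sum_(i <- r) Hk c k (F i).
Proof. exact: (big_morph _ (HkD c k) (Hk0 c k)). Qed.

Lemma HkXn c k i : (i <= k)%N -> Hk c k 'X^i = 'X_ord0 ^+ i * LL c ^+ (k - i).
Proof.
move=> hi; rewrite /Hk (bigD1 (Ordinal (hi : (i < k.+1)%N))) //= coefXn eqxx scale1r.
rewrite big1 ?addr0 // => j hj; rewrite coefXn.
have -> : (j == i :> nat) = false.
  by apply/negbTE; apply: contra hj => /eqP e; apply/eqP/val_inj.
by rewrite scale0r.
Qed.

Lemma poly_expand k F : (size F <= k.+1)%N -> F = \sum_(i < k.+1) F`_i *: 'X^i.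
Proof.
move=> hs; rewrite -poly_def; apply/polyP => j; rewrite coef_poly.
case: ifP => // /negbT; rewrite -leqNgt => hj.
by rewrite nth_default // (leq_trans hs hj).
Qed.

Lemma HkM c k l F G : (size F <= k.+1)%N -> (size G <= l.+1)%N ->
  Hk c (k + l) (F * G) = Hk c k F * Hk c l G.
Proof.
move=> hF hG; rewrite (poly_expand _ _ hF) (poly_expand _ _ hG).
rewrite mulr_suml Hk_sum Hk_sum mulr_suml; apply: eq_bigr => i _.
rewrite mulr_sumr Hk_sum Hk_sum mulr_sumr; apply: eq_bigr => j _.
rewrite -scalerAl -scalerAr !HkZ -scalerAl -scalerAr; congr (_ *: (_ *: _)).
have hi : (i <= k)%N by rewrite -ltnS.
have hj : (j <= l)%N by rewrite -ltnS.
rewrite -exprD !HkXn ?leq_add //.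
have -> : (k + l - (i + j) = (k - i) + (l - j))%N by lia.
rewrite !exprD; rewrite -!mulrA; congr (_ * _).
by rewrite [RHS]mulrC -!mulrA [X in _ * X]mulrC.
Qed.

Lemma size_lin (c : R) : (size (1 + c *: 'X : {poly R})%R <= 2)%N.
Proof.
apply: (leq_trans (size_polyD _ _)); rewrite geq_max size_polyC.
by rewrite (leq_trans (size_scale_leq _ _)) ?size_polyX // (leq_trans (leq_b1 _)).
Qed.

Lemma HkPow c a F : (size F <= 2)%N -> Hk c a (F ^+ a) = Hk c 1 F ^+ a.
Proof.
move=> hF; elim: a => [|a IH].
  by rewrite !expr0 -(expr0 'X) HkXn // expr0 mul1r subnn expr0.
rewrite exprS; change (Hk c (1 + a) (F * F ^+ a) = Hk c 1 F ^+ a.+1).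
rewrite HkM // ?IH ?exprS //.
apply: (leq_trans (size_poly_exp_leq _ _)); rewrite ltnS.
move: hF; case: (size F) => [|[|[|]]] //= _; lia.
Qed.

Lemma Hk1X c : Hk c 1 'X = 'X_ord0.
Proof. by rewrite -(expr1 'X) HkXn // expr1 subnn expr0 mulr1. Qed.

Lemma Hk1L c : Hk c 1 (1 + c *: 'X) = 'X_i1.
Proof.
rewrite HkD HkZ Hk1X -(expr0 'X) HkXn // expr0 mul1r subn0 expr1.
by rewrite /LL subrK.
Qed.

Lemma XmE (m : 'X_{1..2}) : 'X_[m] = 'X_ord0 ^+ m ord0 * 'X_i1 ^+ m i1 :> {mpoly R[2]}.
Proof.
rewrite mpolyXE_id big_ord_recl big_ord_recl big_ord0 mulr1.
by have -> : lift ord0 ord0 = i1 by apply: val_inj.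
Qed.

Lemma mdeg2 (m : 'X_{1..2}) : mdeg m = (m ord0 + m i1)%N.
Proof.
rewrite mdegE big_ord_recl big_ord_recl big_ord0 addn0.
by have -> : lift ord0 ord0 = i1 by apply: val_inj.
Qed.

Lemma HD c k f : f \is k.-homog -> Hk c k (Dm c f) = f.
Proof.
move=> /dhomogP hf; rewrite {1}(mpolyE f) Dm_sum Hk_sum [RHS]mpolyE.
apply: eq_big_seq => m hm; rewrite DmZ HkZ; congr (_ *: _).
have <- : mdeg m = k by apply: hf.
rewrite XmE DmM !DmXn DmX0 DmX1 mdeg2 HkM ?size_polyXn //.
  rewrite HkPow ?size_polyX // HkPow ?size_lin // Hk1X Hk1L //.
apply: (leq_trans (size_poly_exp_leq _ _)); rewrite ltnS.
have := size_lin c; case: (size _) => [|[|[|]]] //= _; lia.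
Qed.

Lemma Dm_size c k f : f \is k.-homog -> (size (Dm c f) <= k.+1)%N.
Proof.
move=> hf; rewrite -(HD c _ _ hf) DmH_gen; exact: size_poly.
Qed.

Lemma Dm_inj c k f g : f \is k.-homog -> g \is k.-homog -> Dm c f = Dm c g -> f = g.
Proof. by move=> hf hg e; rewrite -(HD c _ _ hf) -(HD c _ _ hg) e. Qed.

Lemma top_lin (c : R) j : ((1 + c *: 'X : {poly R}) ^+ j)`_j = c ^+ j.
Proof.
elim: j => [|j IH]; first by rewrite !expr0 coefC.
rewrite exprSr mulrDr mulr1 coefD -scalerAr coefZ coefMX /= IH exprSr.
rewrite nth_default ?add0r ?[_ * c]mulrC //.
apply: (leq_trans (size_poly_exp_leq _ _)); rewrite ltnS.
have := size_lin c; case: (size _) => [|[|[|]]] //= _; lia.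
Qed.

Definition revE k (F : {poly R}) : {poly R} := \sum_(i < k.+1) F`_i *: 'X^(k - i).

Lemma coef_top c k f : f \is k.-homog -> (Dm c f)`_k = (revE k (Dm 0 f)).[c].
Proof.
move=> hf; rewrite -{1}(HD 0 _ _ hf) /Hk Dm_sum coef_sum /revE horner_sum.
apply: eq_bigr => i _; rewrite DmZ coefZ hornerZ DmM !DmXn DmX0; congr (_ * _).
have -> : Dm c (LL 0) = 1 + c *: 'X by rewrite /LL scale0r subr0 DmX1.
by rewrite coefXnM ltnNge -ltnS ltn_ord /= top_lin hornerXn.
Qed.

Lemma revE_neq0 k F : (size F <= k.+1)%N -> F != 0 -> revE k F != 0.
Proof.
move=> hs hF; set i := (size F).-1.
have hi : (i < k.+1)%N by rewrite /i prednK ?size_poly_gt0 //.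
have hFi : F`_i != 0 by rewrite -lead_coefE lead_coef_eq0.
apply/eqP => /(congr1 (fun P : {poly R} => P`_(k - i))).
rewrite /revE coef_sum coef0 (bigD1 (Ordinal hi)) //= coefZ coefXn eqxx mulr1.
rewrite big1 ?addr0; first by apply/eqP.
move=> j hj; rewrite coefZ coefXn.
have -> : (k - i == k - j)%N = false.
  apply/negbTE; apply: contra hj => /eqP e; apply/eqP/val_inj => /=.
  have := ltn_ord j; rewrite ltnS; move: hi; rewrite ltnS; lia.
by rewrite mulr0.
Qed.

Lemma nonroot (P : {poly R}) : P != 0 -> exists x : R, P.[x] != 0.
Proof.
move=> hP; apply: not_all_not_ex => hall.
have H := @max_poly_roots _ P [seq n%:R | n <- iota 0 (size P)] hP.
rewrite size_map size_iota ltnn in H.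
suff: false by [].
apply: H.
  apply/allP => x /mapP [n _ ->]; apply/rootP/eqP/negPn/negP; exact: hall.
by rewrite map_inj_uniq ?iota_uniq // => a b /eqP; rewrite eqr_nat => /eqP.
Qed.

Lemma size_sumsq k (Ws : seq {poly R}) :
  (forall w, w \in Ws -> size w <= k.+1)%N ->
  (size (\sum_(w <- Ws) w ^+ 2)%R <= (2 * k).+1)%N.
Proof.
move=> hW; rewrite big_seq; apply: (big_ind (fun P : {poly R} => size P <= (2 * k).+1)%N).
- by rewrite size_poly0.
- by move=> x y hx hy; apply: (leq_trans (size_polyD _ _)); rewrite geq_max hx hy.
- move=> w /hW hw; apply: (leq_trans (size_polyMleq _ _)); lia.
Qed.

Lemma core m d (G Q P : {poly R}) (Us Vs : seq {poly R}) :
  (m <= d)%N -> size G = m.+1 -> coprimep G Q ->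
  (size Q <= (2 * (d - m)).+1)%N -> (size P <= (2 * d).+1)%N ->
  P = \sum_(u <- Us) u ^+ 2 -> Q = \sum_(v <- Vs) v ^+ 2 ->
  exists Ws : seq {poly R}, (forall w, w \in Ws -> size w <= m.+1)%N /\
  exists T : {poly R}, (size T <= (2 * d - m).+1)%N /\
     P - (\sum_(w <- Ws) w ^+ 2) * Q = T * G.
Proof.
move=> hmd hG /Bezout_eq1_coprimepP [[a b] /= hab] hQs hPs hP hQ.
have G0 : G != 0 by rewrite -size_poly_eq0 hG.
pose cong (x y : {poly R}) := G %| x - y.
have congD (x x' y y' : {poly R}) : cong x x' -> cong y y' -> cong (x + y) (x' + y').
  move=> h1 h2; rewrite /cong (_ : _ - _ = (x - x') + (y - y')); last first.
  by rewrite opprD addrACA.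
  exact: dvdp_add.
have congM (x x' y y' : {poly R}) : cong x x' -> cong y y' -> cong (x * y) (x' * y').
  move=> h1 h2; rewrite /cong (_ : _ - _ = (x - x') * y + x' * (y - y')).
    by apply: dvdp_add; [exact: dvdp_mulr | exact: dvdp_mull].
  by ring.
have congR (x : {poly R}) : cong x x by rewrite /cong subrr dvdp0.
have cong_sum (I : Type) (r : seq I) (F F' : I -> {poly R}) :
    (forall i, cong (F i) (F' i)) -> cong (\sum_(i <- r) F i) (\sum_(i <- r) F' i).
  move=> hF; elim: r => [|i r IH]; first by rewrite !big_nil.
  by rewrite !big_cons congD.
pose Ws := [seq (b * u * v) %% G | u <- Us, v <- Vs].
exists Ws; split.
  by move=> w /allpairsP [[u v] [_ _ ->]]; rewrite -hG; apply: ltnW; rewrite ltn_modp.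
pose S := \sum_(w <- Ws) w ^+ 2.
rewrite -/S.
have hcong : cong (S * Q) P.
  have e1 : cong (S * Q) (\sum_(u <- Us) \sum_(v <- Vs) (b * u * v) ^+ 2 * Q).
    rewrite /S big_allpairs_dep mulr_suml; apply: (cong_sum _) => u.
    rewrite mulr_suml; apply: (cong_sum _) => v; apply: (congM _) => //.
    rewrite expr2 expr2; apply: (congM _); rewrite /cong {2}(divp_eq (b * u * v) G);
      rewrite (_ : forall A B : {poly R}, B - (A + B) = - A) ?dvdpNr ?dvdp_mull //;
      by move=> A B; ring.
  have e2 : \sum_(u <- Us) \sum_(v <- Vs) (b * u * v) ^+ 2 * Q = (b * Q) ^+ 2 * P.
    rewrite hP mulr_sumr; apply: eq_bigr => u _.
    rewrite (_ : (b * Q) ^+ 2 * u ^+ 2 = ((b * u) ^+ 2 * Q) * Q); last by ring.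
    rewrite {3}hQ mulr_sumr; apply: eq_bigr => v _; ring.
  rewrite e2 in e1; rewrite /cong.
  have e3 : cong ((b * Q) ^+ 2 * P) P.
    rewrite /cong (_ : _ - _ = - (a * G) * (b * Q + 1) * P).
      by apply: dvdp_mulr; apply: dvdp_mulr; rewrite dvdpNr dvdp_mull.
    have -> : b * Q = 1 - a * G by rewrite -hab; ring.
    ring.
  rewrite (_ : S * Q - P = (S * Q - (b * Q) ^+ 2 * P) + ((b * Q) ^+ 2 * P - P)).
    exact: dvdp_add.
  ring.
set T := (S * Q - P) %/ G.
have hT : S * Q - P = T * G by rewrite divpK.
exists (- T); split; last by rewrite mulNr -hT opprB.
rewrite size_polyN.
have hS : (size S <= (2 * m).+1)%N.
  apply: size_sumsq => w /allpairsP [[u v] [_ _ ->]].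
  by rewrite -hG; apply: ltnW; rewrite ltn_modp.
have hSQ : (size (S * Q - P)%R <= (2 * d).+1)%N.
  apply: (leq_trans (size_polyD _ _)); rewrite geq_max size_polyN hPs andbT.
  apply: (leq_trans (size_polyMleq _ _)); rewrite -subn1; move: hS hQs; move: (size S) (size Q) => x y; lia.
have [->|T0] := eqVneq T 0; first by rewrite size_poly0.
rewrite hT size_mul // hG in hSQ; move: hSQ; move: (size T) => x; lia.
Qed.

Lemma exact_deg m g : g \is m.-homog -> g != 0 ->
  exists c : R, size (Dm c g) = m.+1.
Proof.
move=> hg g0.
have F0 : Dm 0 g != 0.
  by apply: contra g0 => /eqP e; rewrite -(HD 0 _ _ hg) e Hk0.
have [c hc] := nonroot _ (revE_neq0 _ _ (Dm_size 0 _ _ hg) F0).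
exists c; apply/eqP; rewrite eqn_leq Dm_size //=.
rewrite ltnNge; apply: contra hc => hs.
by rewrite -coef_top // nth_default.
Qed.

Lemma lift_div c k r (h u : {poly R}) f : f \is k.-homog ->
  Dm c f = u * h -> size h = r.+1 -> (size u <= (k - r).+1)%N -> (r <= k)%N ->
  f = Hk c r h * Hk c (k - r) u.
Proof.
move=> hf e hh hu hr.
have hom := dhomogM (Hk_homog c r h) (Hk_homog c (k - r) u).
rewrite subnKC // in hom.
by apply: (Dm_inj c _ _ _ hf hom); rewrite DmM !DmH ?hh // e mulrC.
Qed.

Lemma cop_transfer c m n g q : g \is m.-homog -> q \is n.-homog ->
  size (Dm c g) = m.+1 -> coprime_forms g q -> coprimep (Dm c g) (Dm c q).
Proof.
move=> hg hq hG hcop; set G := Dm c g; set Q := Dm c q.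
apply/idPn => hn; set h := gcdp G Q.
have G0 : G != 0 by rewrite -size_poly_eq0 hG.
have h0 : h != 0 by rewrite gcdp_eq0 negb_and G0.
have hs : (1 < size h)%N.
  move: hn; rewrite /coprimep -/h; move: h0; rewrite -size_poly_eq0.
  by case: (size h) => [|[|]].
set r := (size h).-1.
have hr : size h = r.+1 by rewrite /r prednK // ltnW.
clearbody r.
have hdg : h %| G := dvdp_gcdl G Q.
have hdq : h %| Q := dvdp_gcdr G Q.
have eG : G = (G %/ h) * h by rewrite divpK.
set u := G %/ h in eG; clearbody u.
have u0 : u != 0 by apply: contra G0 => /eqP e; rewrite eG e mul0r.
have su : (size u + r = m.+1)%N.
  by have := size_mul u0 h0; rewrite -eG hG hr addnS /= => ->.
have fg : mdivides (Hk c r h) g.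
  exists (Hk c (m - r) u); apply: (lift_div _ _ _ _ _ _ hg eG hr); have := size_poly_gt0 u; rewrite u0; move: su; move: (size u) => x su hx; clear -su hx; lia.
have fq : mdivides (Hk c r h) q.
  have [Q0|Q0] := eqVneq Q 0.
    exists 0; rewrite mulr0; apply: (Dm_inj c _ _ _ hq (rpred0 _)).
    by rewrite -/Q Q0 Dm0.
  have eQ : Q = (Q %/ h) * h by rewrite divpK.
  set v := Q %/ h in eQ; clearbody v.
  have v0 : v != 0 by apply: contra Q0 => /eqP e; rewrite eQ e mul0r.
  have sv : (size v + r = size Q)%N.
    by have := size_mul v0 h0; rewrite -eQ hr addnS /= => ->.
  have sQ := Dm_size c _ _ hq; rewrite -/Q in sQ.
  have sv0 : (0 < size v)%N by rewrite size_poly_gt0.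
  exists (Hk c (n - r) v); apply: (lift_div _ _ _ _ _ _ hq eQ hr); move: sv sQ sv0; move: (size v) (size Q) => x y a b e; clear -a b e; lia.
have [a ha] := hcop _ fg fq.
have := congr1 (Dm c) ha; rewrite DmH ?hr // DmC => e.
by move: hs; rewrite e size_polyC; case: (a != 0).
Qed.

Lemma sos_homog n p : @sos_form R n p -> p \is (2 * n)%N.-homog.
Proof.
move=> [ws [hw ->]]; rewrite big_seq; apply: rpred_sum => w /hw hw'.
by rewrite mulnC; apply: dhomogMn.
Qed.

Lemma sos_Dm c n p : @sos_form R n p -> exists Us, Dm c p = \sum_(u <- Us) u ^+ 2.
Proof.
move=> [ws [hw ->]]; exists (map (Dm c) ws); rewrite Dm_sum big_map.
by apply: eq_bigr => w _; rewrite DmXn.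
Qed.
End S.

Arguments Dm {R}.
Arguments Hk {R}.
Arguments sos_homog {R n p}.
Arguments sos_Dm {R} c {n p}.
Arguments exact_deg {R m g}.
Arguments cop_transfer {R} c {m n g q}.
Arguments core {R m d G Q P Us Vs}.
Arguments Dm_size {R} c {k f}.
Arguments Dm_inj {R} c {k f g}.
Arguments Hk_homog {R}.
Arguments DmH {R c k F}.

Theorem lemma3p7 (R : realType) (m d : nat) (g q p : {mpoly R[2]}) :
  (m <= d)%N ->
  binary_form m g ->
  sos_form (d - m) q ->
  sos_form d p ->
  coprime_forms g q ->
  exists s : {mpoly R[2]},
    sos_form m s /\ exists t : {mpoly R[2]}, p - s * q = t * g.
Proof.
rewrite /binary_form => hmd hg hq hp hcop.
have hQh := sos_homog hq; have hPh := sos_homog hp.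
have [g0|g0] := eqVneq g 0.
  subst g.
  have [a ha] : exists a, q = a%:MP.
    by apply: (hcop q); [exists 0; rewrite mulr0 | exists 1; rewrite mulr1].
  have a0 : a != 0.
    apply/eqP => a0; move: ha; rewrite a0 => ha.
    have [b hb] : exists b : R, ('X_ord0 : {mpoly R[2]}) = b%:MP.
      by apply: (hcop 'X_ord0); exists 0; rewrite mulr0 // ha mpolyC0.
    have := congr1 (Dm 0) hb; rewrite DmX0 DmC => e.
    by have := size_polyX R; rewrite e size_polyC; case: (b != 0).
  have q0 : q != 0 by rewrite ha mpolyC_eq0.
  have hC : q \is 0.-homog by rewrite ha -alg_mpolyC; apply: rpredZ; apply: dhomog1.
  have := dhomog_uniq q0 hC hQh => e0.
  have hdm : d = m by move: e0 hmd; lia.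
  subst d; rewrite subnn in hq.
  have apos : 0 < a.
    have [ws [hw hqws]] := hq.
    have ea : a = (Dm 0 q)`_0 by rewrite ha DmC coefC.
    rewrite lt_def a0 /= ea hqws Dm_sum coef_sum big_seq.
    apply: sumr_ge0 => w /hw hw'.
    have := Dm_size 0 hw'; move/size1_polyC => e.
    by rewrite DmXn e expr2 -polyCM coefC /= -expr2 sqr_ge0.
  have [ws [hw hpws]] := hp.
  set k := (Num.sqrt a)^-1.
  exists (\sum_(w <- map (fun w => k *: w) ws) w ^+ 2); split.
    exists (map (fun w => k *: w) ws); split => //.
    by move=> w /mapP [w' /hw hw' ->]; apply: rpredZ.
  exists 0; rewrite mul0r; apply/eqP; rewrite subr_eq0; apply/eqP.
  rewrite big_map (eq_bigr (fun w => k ^+ 2 *: w ^+ 2)); last by move=> w _; rewrite exprZn.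
  rewrite -scaler_sumr -hpws ha mulrC mul_mpolyC scalerA /k exprVn sqr_sqrtr ?ltW //.
  by rewrite mulfV ?scale1r.
have [c hc] := exact_deg hg g0.
have cop := cop_transfer c hg hQh hc hcop.
have [Us hU] := sos_Dm c hp; have [Vs hV] := sos_Dm c hq.
have [Ws [hW [T [hT e]]]] :=
  core hmd hc cop (Dm_size c hQh) (Dm_size c hPh) hU hV.
exists (\sum_(w <- map (Hk c m) Ws) w ^+ 2); split.
  exists (map (Hk c m) Ws); split => //.
  by move=> w /mapP [W _ ->]; apply: Hk_homog.
exists (Hk c (2 * d - m) T).
have hs : (\sum_(w <- map (Hk c m) Ws) w ^+ 2) \is (2 * m)%N.-homog.
  by apply: sos_homog; exists (map (Hk c m) Ws); split => // w /mapP [W _ ->]; apply: Hk_homog.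
have h1 := dhomogM hs hQh.
rewrite (_ : (2 * m + 2 * (d - m) = 2 * d)%N) in h1; last by lia.
have h2 := dhomogM (Hk_homog c (2 * d - m) T) hg.
rewrite (_ : (2 * d - m + m = 2 * d)%N) in h2; last by lia.
apply: (Dm_inj c (rpredB hPh h1) h2).
rewrite DmB !DmM Dm_sum big_map DmH // -e; congr (_ - _ * _).
by apply: eq_big_seq => w hw; rewrite DmXn DmH // hW.
Qed.
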